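(* Fix $\epsilon>0$. There is a constant $C$, depending only on $p$ and $\epsilon$, such that for every $\lambda\neq0$ with $|\arg\lambda|\le\pi-\epsilon$ and all real numbers $\mu_i,\mu_j$, $$\Big|\frac{\mu_i-\mu_j}{h_\lambda(\mu_i)-h_\lambda(\mu_j)}\Big|\le C\,\Lambda_{ij},\qquad \Lambda_{ij}=\max\big\{1,\ |\lambda|^{\frac1{2p}}|\mu_i|^{1-\frac1p},\ |\lambda|^{\frac1{2p}}|\mu_j|^{1-\frac1p}\big\}.$$ When $\mu_i=\mu_j$ the quotient is read as $1/h_\lambda'(\mu_i)$. Equivalently, for every Hermitian $K$ with eigenvalues $\mu_1,\dots,\mu_N$, the $(i,j)$ eigenvalue of the operator $(1\otimes1+\Sigma_\lambda(K))^{-1}$ is bounded in modulus by $C\Lambda_{ij}$.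
   Context: Fix an integer $p\ge2$. Let $T_p(z)$ be the Fuss–Catalan function: the unique solution of $zT^p-T+1=0$ analytic on $\mathbb C\setminus[(p-1)^{p-1}/p^p,\infty)$ with $T_p(0)=1$. Square roots are principal branches. For $\lambda\in\mathbb C$ set $f_\lambda(u)=\sqrt{T_p(-\lambda u^{2p-2})}$ and $h_\lambda(u)=uf_\lambda(u)$. Its inverse is $k_\lambda(v)=v\sqrt{1+\lambda v^{2p-2}}$. For an $N\times N$ Hermitian matrix $K$ with orthonormal eigenbasis $e_1,\dots,e_N$ and eigenvalues $\mu_1,\dots,\mu_N$, the operator $(1\otimes1+\Sigma_\lambda(K))^{-1}=\frac{K\otimes1-1\otimes K}{h_\lambda(K)\otimes1-1\otimes h_\lambda(K)}$ on $\mathbb C^N\otimes\mathbb C^N$ is diagonal in the basis $e_i\otimes e_j$. Its eigenvalue on $e_i\otimes e_j$ is $\frac{\mu_i-\mu_j}{h_\lambda(\mu_i)-h_\lambda(\mu_j)}$, read as $1/h'_\lambda(\mu_i)$ if $\mu_i=\mu_j$. *)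

(* Defs.v *)
From Stdlib Require Import Reals Lra Lia.
Open Scope R_scope.

Definition Cx := (R * R)%type.
Definition Cre (z : Cx) : R := fst z.
Definition Cim (z : Cx) : R := snd z.
Definition CofR (a : R) : Cx := (a, 0).
Definition Cadd (z w : Cx) : Cx := (fst z + fst w, snd z + snd w).
Definition Copp (z : Cx) : Cx := (- fst z, - snd z).
Definition Csub (z w : Cx) : Cx := Cadd z (Copp w).
Definition Cmul (z w : Cx) : Cx :=
  (fst z * fst w - snd z * snd w, fst z * snd w + snd z * fst w).
Definition Cnorm (z : Cx) : R := sqrt (fst z ^ 2 + snd z ^ 2).
(** Inverse (total; 0 maps to 0). *)
Definition Cinv (z : Cx) : Cx :=
  (fst z / (fst z ^ 2 + snd z ^ 2), - snd z / (fst z ^ 2 + snd z ^ 2)).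
Definition Cdiv (z w : Cx) : Cx := Cmul z (Cinv w).
Fixpoint Cpow (z : Cx) (n : nat) : Cx :=
  match n with O => (1, 0) | S m => Cmul z (Cpow z m) end.

(** Principal square root: the root w of z with Re w > 0, or Re w = 0 and Im w >= 0. *)
Definition Csqrt (z : Cx) : Cx :=
  (sqrt ((Cnorm z + fst z) / 2),
   (if Rlt_dec (snd z) 0 then -1 else 1) * sqrt ((Cnorm z - fst z) / 2)).

Definition arg_bound (lam : Cx) (eps : R) : Prop :=
  exists theta : R, - PI < theta <= PI /\ Rabs theta <= PI - eps /\
    lam = (Cnorm lam * cos theta, Cnorm lam * sin theta).

Definition branch_pt (p : nat) : R := INR (p - 1) ^ (p - 1) / INR p ^ p.
Definition slit_dom (p : nat) (z : Cx) : Prop :=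
  ~ (snd z = 0 /\ branch_pt p <= fst z).

(** T is the Fuss–Catalan function T_p on the slit domain: the solution of
    z T^p - T + 1 = 0 on the slit domain with T(0) = 1 that is continuous there
    (equivalently analytic there: the roots are simple on the slit domain, so the
    continuous branch is unique and analytic by the implicit function theorem). *)
Definition is_fuss_catalan (p : nat) (T : Cx -> Cx) : Prop :=
  T (0, 0) = (1, 0) /\
  (forall z, slit_dom p z ->
     Cadd (Csub (Cmul z (Cpow (T z) p)) (T z)) (1, 0) = (0, 0)) /\
  (forall z, slit_dom p z -> forall e, e > 0 -> exists d, d > 0 /\
     forall w, slit_dom p w -> Cnorm (Csub w z) < d -> Cnorm (Csub (T w) (T z)) < e).

Definition f_lam (p : nat) (T : Cx -> Cx) (lam : Cx) (u : R) : Cx :=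
  Csqrt (T (Cmul (Copp lam) (CofR (u ^ (2 * p - 2))))).
Definition h_lam (p : nat) (T : Cx -> Cx) (lam : Cx) (u : R) : Cx :=
  Cmul (CofR u) (f_lam p T lam u).

Definition has_cderiv (g : R -> Cx) (x : R) (d : Cx) : Prop :=
  derivable_pt_lim (fun t => fst (g t)) x (fst d) /\
  derivable_pt_lim (fun t => snd (g t)) x (snd d).

(** x^y for x >= 0 and y > 0, with 0^y = 0 (Stdlib's Rpower 0 y is 1). *)
Definition rpow (x y : R) : R := if Req_EM_T x 0 then 0 else Rpower x y.

Definition Lambda (p : nat) (lam : Cx) (mi mj : R) : R :=
  Rmax 1 (Rmax (rpow (Cnorm lam) (/ (2 * INR p)) * rpow (Rabs mi) (1 - / INR p))
               (rpow (Cnorm lam) (/ (2 * INR p)) * rpow (Rabs mj) (1 - / INR p))).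

(* Main.v *)
Require Import Defs.
From Stdlib Require Import Reals Lra Lia Psatz.
From Coquelicot Require Import Coquelicot.
Import Defs.
Open Scope R_scope.

Lemma Cpow_eq (z: Cx) n : Defs.Cpow z n = Complex.Cpow z n.
Proof. induction n; simpl; [reflexivity| now rewrite IHn]. Qed.

Definition cis (a:R) : C := (cos a, sin a).

Lemma Cmod_cis a : Cmod (cis a) = 1.
Proof.
  unfold Cmod, cis; simpl.
  replace (cos a * (cos a * 1) + sin a * (sin a * 1)) with 1 by (pose proof (sin2_cos2 a); unfold Rsqr in *; lra).
  apply sqrt_1.
Qed.

Lemma cis_mult a b : (cis a * cis b)%C = cis (a + b).
Proof. unfold cis, Cmult; simpl; rewrite cos_plus, sin_plus; f_equal; ring. Qed.

Lemma Cpow_cis a n : Complex.Cpow (cis a) n = cis (INR n * a).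
Proof.
  induction n.
  - simpl. unfold cis. rewrite Rmult_0_l, cos_0, sin_0. reflexivity.
  - rewrite Cpow_S, IHn, cis_mult, S_INR. f_equal; ring.
Qed.

Lemma im_le_Cmod' (c : C) : Rabs (Im c) <= Cmod c.
Proof.
  unfold Cmod. rewrite <- sqrt_Rsqr_abs. apply sqrt_le_1_alt.
  unfold Rsqr, Im; simpl. destruct c; simpl. nra.
Qed.

Lemma pow_lt_l (x y : R) k : 0 <= y -> y < x -> (1 <= k)%nat -> y ^ k < x ^ k.
Proof.
  intros Hy Hxy Hk. induction k. lia.
  destruct k. simpl; lra.
  assert (y ^ S k < x ^ S k) by (apply IHk; lia).
  simpl in *. assert (0 <= y * y ^ k) by (apply Rmult_le_pos; [lra| apply pow_le; lra]). nra.
Qed.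

Lemma pow_le_inv (x y : R) k : 0 <= x -> 0 <= y -> (1 <= k)%nat -> x ^ k <= y ^ k -> x <= y.
Proof.
  intros Hx Hy Hk H. destruct (Rle_lt_dec x y); auto.
  pose proof (pow_lt_l x y k Hy r Hk). lra.
Qed.

Lemma polar_lower (t:C) : t <> 0%C -> Im t <= 0 ->
  exists a, -PI <= a <= 0 /\ t = (RtoC (Cmod t) * cis a)%C.
Proof.
  intros Ht Him.
  assert (Hm : 0 < Cmod t) by (apply Cmod_gt_0; auto).
  set (x := Re t / Cmod t).
  assert (Hx : -1 <= x <= 1).
  { pose proof (re_le_Cmod t). unfold x. split.
    - apply (Rmult_le_reg_r (Cmod t)); auto. unfold Rdiv. rewrite Rmult_assoc, Rinv_l by lra.
      apply Rabs_le_between in H. lra.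
    - apply (Rmult_le_reg_r (Cmod t)); auto. unfold Rdiv. rewrite Rmult_assoc, Rinv_l by lra.
      apply Rabs_le_between in H. lra. }
  exists (- acos x). pose proof (acos_bound x). split. lra.
  unfold cis. rewrite cos_neg, sin_neg, cos_acos by auto. rewrite sin_acos by auto.
  assert (H2 : Cmod t ^ 2 = Re t ^ 2 + Im t ^ 2) by apply Cmod2_alt.
  assert (Hs : sqrt (1 - x²) = - Im t / Cmod t).
  { replace (1 - x²) with ((- Im t / Cmod t) ^ 2).
    - apply sqrt_pow2. unfold Rdiv. apply Rmult_le_pos; [lra| left; apply Rinv_0_lt_compat; lra].
    - unfold x, Rsqr. apply (Rmult_eq_reg_r (Cmod t ^ 2)); [|apply pow_nonzero; lra]. field_simplify; try lra. }
  rewrite Hs. destruct t as [tr ti]. unfold x, Re, Im in *; simpl in *.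
  unfold RtoC, Cmult; simpl. f_equal; field; lra.
Qed.

Lemma PI_p_bounds p : (2 <= p)%nat -> 0 < PI / INR p <= PI / 2.
Proof.
  intro Hp. assert (2 <= INR p) by (replace 2 with (INR 2) by (simpl; lra); apply le_INR; auto).
  pose proof PI_RGT_0. split. apply Rdiv_lt_0_compat; lra.
  unfold Rdiv. apply Rmult_le_compat_l. lra. apply Rinv_le_contravar; lra.
Qed.

Lemma Im_scal_cis (r b : R) : Im (RtoC r * cis b)%C = r * sin b.
Proof. unfold cis, Cmult, RtoC, Im; simpl; ring. Qed.
Lemma Re_scal_cis (r b : R) : Re (RtoC r * cis b)%C = r * cos b.
Proof. unfold cis, Cmult, RtoC, Re; simpl; ring. Qed.

Lemma sin_neg_open x : -PI < x < 0 -> sin x < 0.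
Proof. intros. rewrite <- (Ropp_involutive x), sin_neg. pose proof (sin_gt_0 (-x)). lra. Qed.

Definition om (p:nat) : C := cis (PI / INR p).
Definition G (p:nat) (t:C) : R := Rmin (- Im t) (Im (om p * t)%C).

Lemma polar_sector p (t:C) : (2 <= p)%nat -> t <> 0%C -> Im t <= 0 -> 0 <= Im (om p * t)%C ->
  exists a, -(PI / INR p) <= a <= 0 /\ t = (RtoC (Cmod t) * cis a)%C.
Proof.
  intros Hp Ht Him Hom. destruct (polar_lower t Ht Him) as [a [Ha Hta]].
  exists a. split; auto. split; [|lra].
  assert (Hm : 0 < Cmod t) by (apply Cmod_gt_0; auto).
  destruct (Rle_lt_dec (-(PI/INR p)) a) as [|Hlt]; auto. exfalso.
  rewrite Hta in Hom. unfold om in Hom.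
  replace (cis (PI / INR p) * (RtoC (Cmod t) * cis a))%C with (RtoC (Cmod t) * (cis (PI / INR p) * cis a))%C in Hom by ring.
  rewrite cis_mult, Im_scal_cis in Hom. pose proof (PI_p_bounds p Hp).
  assert (sin (PI / INR p + a) < 0) by (apply sin_neg_open; lra). nra.
Qed.

Lemma Rmin_lip x1 y1 x2 y2 e : Rabs (x1 - x2) <= e -> Rabs (y1 - y2) <= e ->
  Rabs (Rmin x1 y1 - Rmin x2 y2) <= e.
Proof.
  intros H1 H2. unfold Rmin. destruct (Rle_dec x1 y1), (Rle_dec x2 y2);
  revert H1 H2; unfold Rabs; repeat destruct Rcase_abs; intros; lra.
Qed.

Lemma G_lip p (a b : C) : Rabs (G p a - G p b) <= Cmod (a - b)%C.
Proof.
  unfold G. apply Rmin_lip.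
  - replace (- Im a - - Im b) with (- Im (a - b)%C) by (destruct a, b; simpl; ring).
    rewrite Rabs_Ropp. apply im_le_Cmod'.
  - replace (Im (om p * a)%C - Im (om p * b)%C) with (Im (om p * (a - b))%C) by (destruct a, b; unfold Cminus, Cplus, Copp, Cmult; simpl; ring).
    eapply Rle_trans; [apply im_le_Cmod'|]. rewrite Cmod_mult. unfold om. rewrite Cmod_cis. lra.
Qed.

Lemma boundary p (z t : C) : (2 <= p)%nat -> Im z < 0 -> (z * t ^ p - t + 1 = 0)%C -> G p t <> 0.
Proof.
  intros Hp Hz Heq HG. unfold G, Rmin in HG. destruct (Rle_dec (- Im t) (Im (om p * t)%C)).
  -
    destruct t as [x y]. simpl in HG. assert (y = 0) by lra. subst y.
    change (x, 0) with (RtoC x) in Heq. rewrite <- RtoC_pow in Heq.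
    destruct z as [zr zi]. unfold Cminus, Cplus, Cmult, Copp, RtoC in Heq; simpl in Heq.
    injection Heq. intros H2 H1. simpl in Hz.
    assert (Hx : x ^ p = 0) by nra.
    assert (x = 0) by (destruct (Req_dec x 0); auto; exfalso; apply (pow_nonzero x p); auto). subst x. rewrite pow_i in H1 by lia. lra.
  - assert (Hit : 0 < - Im t) by lra.
    set (q := Re (om p * t)%C).
    assert (Hot : (om p * t)%C = RtoC q).
    { unfold q, RtoC. destruct (om p * t)%C as [a b]. simpl in *. rewrite HG. reflexivity. }
    assert (Ht : t = (cis (- (PI / INR p)) * RtoC q)%C).
    { rewrite <- Hot. unfold om. rewrite Cmult_assoc, cis_mult. replace (- (PI / INR p) + PI / INR p) with 0 by ring.
      unfold cis. rewrite cos_0, sin_0. change (1, 0) with (RtoC 1). ring. }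
    pose proof (PI_p_bounds p Hp).
    assert (Hs : 0 < sin (PI / INR p)) by (apply sin_gt_0; lra).
    assert (Hq : 0 < q).
    { rewrite Ht in Hit. replace (cis (- (PI / INR p)) * RtoC q)%C with (RtoC q * cis (- (PI / INR p)))%C in Hit by ring.
      rewrite Im_scal_cis, sin_neg in Hit. nra. }
    assert (Htp : (t ^ p)%C = RtoC (- q ^ p)).
    { rewrite Ht, Cpow_mult_l, Cpow_cis, <- RtoC_pow.
      replace (INR p * - (PI / INR p)) with (- PI) by (field; apply not_0_INR; lia).
      unfold cis. rewrite cos_neg, sin_neg, cos_PI, sin_PI. unfold RtoC, Cmult; simpl. f_equal; ring. }
    rewrite Htp in Heq. rewrite Ht in Heq.
    destruct z as [zr zi]. unfold cis, Cminus, Cplus, Cmult, Copp, RtoC in Heq; simpl in Heq.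
    injection Heq. intros H2 H1. simpl in Hz. rewrite sin_neg in H2.
    assert (0 < q ^ p) by (apply pow_lt; lra). nra.
Qed.

Lemma fc_T0 p T : is_fuss_catalan p T -> T (0,0) = RtoC 1.
Proof. intros [H _]. exact H. Qed.

Lemma fc_eq p T : is_fuss_catalan p T -> forall z, slit_dom p z -> (z * (T z) ^ p - T z + 1 = 0)%C.
Proof. intros [_ [H _]] z Hz. specialize (H z Hz). rewrite Cpow_eq in H. exact H. Qed.

Lemma fc_cont p T : is_fuss_catalan p T -> forall z, slit_dom p z -> forall e, e > 0 -> exists d, d > 0 /\
     forall w, slit_dom p w -> Cmod (w - z)%C < d -> Cmod (T w - T z)%C < e.
Proof. intros [_ [_ H]]. exact H. Qed.

Lemma branch_pos p : (2 <= p)%nat -> 0 < branch_pt p.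
Proof.
  intros Hp. unfold branch_pt. apply Rdiv_lt_0_compat; apply pow_lt.
  - replace 0 with (INR 0) by reflexivity. apply lt_INR. lia.
  - replace 0 with (INR 0) by reflexivity. apply lt_INR. lia.
Qed.

Lemma slit_im p (z:C) : Im z <> 0 -> slit_dom p z.
Proof. intros H [H1 _]. apply H. exact H1. Qed.

Lemma slit_re p (z:C) : (2 <= p)%nat -> Re z <= 0 -> slit_dom p z.
Proof. intros Hp H [_ H2]. pose proof (branch_pos p Hp). unfold Re in H. lra. Qed.

Lemma Cmod_le_abs (c : C) : Cmod c <= Rabs (Re c) + Rabs (Im c).
Proof.
  unfold Cmod. rewrite <- (sqrt_pow2 (Rabs (Re c) + Rabs (Im c))) by (pose proof (Rabs_pos (Re c)); pose proof (Rabs_pos (Im c)); lra).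
  apply sqrt_le_1_alt. destruct c as [x y]. unfold Re, Im; simpl.
  pose proof (Rabs_pos x). pose proof (Rabs_pos y).
  pose proof (Rsqr_abs x). pose proof (Rsqr_abs y). unfold Rsqr in *. simpl. nra.
Qed.

Lemma Cmod_scal_diff (x s : R) (z : C) : Cmod (RtoC x * z - RtoC s * z)%C = Rabs (x - s) * Cmod z.
Proof.
  replace (RtoC x * z - RtoC s * z)%C with (RtoC (x - s) * z)%C.
  - rewrite Cmod_mult, Cmod_R. reflexivity.
  - destruct z; unfold RtoC, Cminus, Cplus, Copp, Cmult; simpl; f_equal; ring.
Qed.

Lemma Im_scal (s : R) (z : C) : Im (RtoC s * z)%C = s * Im z.
Proof. destruct z; unfold RtoC, Cmult, Im; simpl; ring. Qed.
Lemma Re_scal (s : R) (z : C) : Re (RtoC s * z)%C = s * Re z.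
Proof. destruct z; unfold RtoC, Cmult, Re; simpl; ring. Qed.

Lemma pow_near_1 (t : C) (delta : R) n : Cmod (t - 1)%C <= delta -> delta <= 1 ->
  Cmod (t ^ n - 1)%C <= (2 ^ n - 1) * delta.
Proof.
  intros Ht Hd. induction n.
  - simpl. replace (1 - 1)%C with (RtoC 0) by ring. rewrite Cmod_0. lra.
  - replace (t ^ S n - 1)%C with (t * (t ^ n - 1) + (t - 1))%C by (rewrite Cpow_S; ring).
    eapply Rle_trans; [apply Cmod_triangle|]. rewrite Cmod_mult.
    assert (Cmod t <= 2).
    { replace t with ((t - 1) + 1)%C at 1 by ring. eapply Rle_trans; [apply Cmod_triangle|]. rewrite Cmod_1. lra. }
    pose proof (Cmod_ge_0 (t ^ n - 1)%C). pose proof (Cmod_ge_0 t).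
    simpl. nra.
Qed.

Lemma path_pos p T (z0 : C) : (2 <= p)%nat -> is_fuss_catalan p T -> Im z0 < 0 -> 0 < G p (T z0).
Proof.
  intros Hp HT Hz.
  set (g := fun s => G p (T (RtoC s * z0)%C)).
  assert (Hslit : forall s, 0 < s -> slit_dom p (RtoC s * z0)%C).
  { intros s Hs. apply slit_im. rewrite Im_scal. nra. }
  assert (Hne : forall s, 0 < s -> g s <> 0).
  { intros s Hs. unfold g. apply (boundary p (RtoC s * z0)%C); auto.
    rewrite Im_scal; nra. apply (fc_eq p T HT). auto. }
  assert (Hnz : 0 < Cmod z0).
  { apply Cmod_gt_0. intro H. rewrite H in Hz. simpl in Hz. lra. }
  assert (Hcont : forall s, 0 < s -> continuity_pt g s).
  { intros s Hs. unfold continuity_pt, continue_in, limit1_in, limit_in. intros e He.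
    destruct (fc_cont p T HT (RtoC s * z0)%C (Hslit s Hs) e He) as [d [Hd Hw]].
    exists (Rmin s (d / (Cmod z0 + 1))). split.
    { apply Rmin_glb_lt; auto. apply Rdiv_lt_0_compat; lra. }
    intros x [_ Hx]. simpl in Hx |- *. unfold R_dist in *.
    assert (H1 : Rabs (x - s) < s) by (eapply Rlt_le_trans; [exact Hx| apply Rmin_l]).
    assert (H2 : Rabs (x - s) < d / (Cmod z0 + 1)) by (eapply Rlt_le_trans; [exact Hx| apply Rmin_r]).
    assert (Hx0 : 0 < x) by (apply Rabs_def2 in H1; lra).
    eapply Rle_lt_trans; [apply G_lip|]. apply Hw. auto.
    rewrite Cmod_scal_diff.
    apply (Rmult_lt_compat_r (Cmod z0 + 1)) in H2; [|lra].
    unfold Rdiv in H2. rewrite Rmult_assoc, Rinv_l in H2 by lra.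
    pose proof (Rabs_pos (x - s)). nra. }
  assert (Hsmall : exists s1, 0 < s1 <= 1 /\ 0 < g s1).
  { pose proof (PI_p_bounds p Hp).
    assert (Hs : 0 < sin (PI / INR p)) by (apply sin_gt_0; lra).
    assert (H2p : 0 < 2 ^ p) by (apply pow_lt; lra).
    set (e0 := Rmin 1 (Rmin (sin (PI / INR p) / 2) (- Im z0 / (2 * Cmod z0 * 2 ^ p)))).
    assert (He0 : 0 < e0).
    { unfold e0. repeat apply Rmin_glb_lt; try lra. apply Rdiv_lt_0_compat; try lra.
      apply Rmult_lt_0_compat; lra. }
    assert (Hsl0 : slit_dom p (0,0)) by (apply slit_re; auto; simpl; lra).
    destruct (fc_cont p T HT (0,0) Hsl0 e0 He0) as [d [Hd Hw]].
    set (s1 := Rmin 1 (d / (2 * Cmod z0))).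
    assert (Hs1 : 0 < s1) by (unfold s1; apply Rmin_glb_lt; [lra| apply Rdiv_lt_0_compat; lra]).
    exists s1. split. split; auto. apply Rmin_l.
    set (t1 := (T (RtoC s1 * z0)%C : C)).
    assert (Ht1 : Cmod (t1 - 1)%C < e0).
    { unfold t1. rewrite <- (fc_T0 p T HT). apply Hw. auto.
      replace (RtoC s1 * z0 - (0,0))%C with (RtoC s1 * z0 - RtoC 0 * z0)%C by (f_equal; destruct z0; unfold RtoC, Cmult; simpl; f_equal; ring).
      rewrite Cmod_scal_diff. rewrite Rminus_0_r, Rabs_pos_eq by lra.
      assert (s1 <= d / (2 * Cmod z0)) by apply Rmin_r.
      apply (Rmult_le_compat_r (Cmod z0)) in H0; [|lra].
      replace (d / (2 * Cmod z0) * Cmod z0) with (d/2) in H0 by (field; lra). lra. }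
    assert (He01 : e0 <= 1) by apply Rmin_l.
    assert (He02 : e0 <= sin (PI / INR p) / 2) by (unfold e0; eapply Rle_trans; [apply Rmin_r| apply Rmin_l]).
    assert (He03 : e0 <= - Im z0 / (2 * Cmod z0 * 2 ^ p)) by (unfold e0; eapply Rle_trans; [apply Rmin_r| apply Rmin_r]).
    pose proof (pow_near_1 t1 e0 p (Rlt_le _ _ Ht1) He01) as HD.
    assert (Heq := fc_eq p T HT _ (Hslit s1 Hs1)). fold t1 in Heq.
    set (D := (t1 ^ p - 1)%C) in *.
    assert (HIm : Im t1 = s1 * Im z0 + s1 * Im (z0 * D)%C).
    { assert (t1 = 1 + RtoC s1 * z0 * t1 ^ p)%C.
      { apply (f_equal (fun w => w + t1)%C) in Heq. 
        replace (RtoC s1 * z0 * t1 ^ p - t1 + 1 + t1)%C with (1 + RtoC s1 * z0 * t1 ^ p)%C in Heq by ring.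
        rewrite Heq. ring. }
      replace (t1 ^ p)%C with (1 + D)%C in H0 by (unfold D; ring).
      rewrite H0 at 1. destruct z0, D; unfold RtoC, Cmult, Cplus, Im; simpl; ring. }
    assert (HzD : Rabs (Im (z0 * D)%C) <= Cmod z0 * Cmod D).
    { rewrite <- Cmod_mult. apply im_le_Cmod'. }
    assert (HDb : Cmod z0 * Cmod D <= - Im z0 / 2).
    { assert (Cmod D <= 2 ^ p * e0) by (pose proof (Cmod_ge_0 D); nra).
      apply (Rmult_le_compat_l (2 ^ p)) in He03; [|lra].
      replace (2 ^ p * (- Im z0 / (2 * Cmod z0 * 2 ^ p))) with (- Im z0 / (2 * Cmod z0)) in He03 by (field; lra).
      apply (Rmult_le_compat_l (Cmod z0)) in He03; [|lra].
      replace (Cmod z0 * (- Im z0 / (2 * Cmod z0))) with (- Im z0 / 2) in He03 by (field; lra).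
      nra. }
    assert (Hg1 : 0 < - Im t1).
    { rewrite HIm. apply Rabs_le_between in HzD. nra. }
    assert (Hg2 : 0 < Im (om p * t1)%C).
    { replace (om p * t1)%C with (om p + om p * (t1 - 1))%C by ring.
      assert (Rabs (Im (om p * (t1 - 1))%C) <= Cmod (t1 - 1)%C).
      { eapply Rle_trans; [apply im_le_Cmod'|]. rewrite Cmod_mult. unfold om; rewrite Cmod_cis. lra. }
      apply Rabs_le_between in H0.
      replace (Im (om p + om p * (t1 - 1))%C) with (sin (PI / INR p) + Im (om p * (t1 - 1))%C)
        by (unfold om, cis; destruct t1; simpl; ring).
      lra. }
    unfold g. fold t1. unfold G. apply Rmin_glb_lt; auto. }
  destruct Hsmall as [s1 [[Hs1 Hs11] Hg1]].
  assert (Hg := Hne 1 Rlt_0_1).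
  replace (T z0) with (T (RtoC 1 * z0)%C) by (f_equal; ring). fold (g 1).
  destruct (Rlt_le_dec 0 (g 1)) as [|Hle]; auto. exfalso.
  destruct (Req_dec s1 1) as [Heq1|Hneq1].
  { subst s1. lra. }
  destruct (Ranalysis5.IVT_interv (fun s => - g s) s1 1) as [c [Hc Hc0]].
  - intros a Ha. apply continuity_pt_opp. apply Hcont. lra.
  - lra.
  - lra.
  - assert (g 1 < 0) by lra. lra.
  - apply (Hne c); lra.
Qed.

Lemma G_nonneg p T (z0 : C) : (2 <= p)%nat -> is_fuss_catalan p T -> Im z0 <= 0 ->
  (Im z0 < 0 \/ Re z0 <= 0) -> 0 <= G p (T z0).
Proof.
  intros Hp HT Hz Hor.
  destruct (Rlt_le_dec (Im z0) 0) as [Hlt|Hge].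
  { left. apply path_pos; auto. }
  assert (Hz0 : Im z0 = 0) by lra.
  destruct Hor as [|Hre]; [lra|].
  destruct (Rle_lt_dec 0 (G p (T z0))) as [|Hneg]; auto. exfalso.
  assert (Hsl : slit_dom p z0) by (apply slit_re; auto).
  destruct (fc_cont p T HT z0 Hsl (- G p (T z0) / 2)) as [d [Hd Hw]]. lra.
  set (w := (Re z0, - d / 2) : C).
  assert (Hwi : Im w < 0) by (unfold w; simpl; lra).
  pose proof (path_pos p T w Hp HT Hwi).
  assert (Cmod (T w - T z0)%C < - G p (T z0) / 2).
  { apply Hw. apply slit_im. lra.
    eapply Rle_lt_trans; [apply Cmod_le_abs|].
    assert (Hr : Re (w - z0)%C = 0) by (unfold w; destruct z0; simpl; ring).
    assert (Hi : Im (w - z0)%C = - (d / 2)) by (unfold w; destruct z0; simpl in *; lra).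
    rewrite Hr, Hi, Rabs_R0, Rabs_Ropp, Rabs_pos_eq by lra. lra. }
  pose proof (G_lip p (T w) (T z0)). apply Rabs_le_between in H1. lra.
Qed.

Lemma Cconj_1 : Cconj (RtoC 1) = RtoC 1.
Proof. unfold Cconj, RtoC; simpl; f_equal; ring. Qed.
Lemma Cconj_0 : Cconj (RtoC 0) = RtoC 0.
Proof. unfold Cconj, RtoC; simpl; f_equal; ring. Qed.

Lemma slit_conj p (z : C) : slit_dom p z -> slit_dom p (Cconj z).
Proof. unfold slit_dom, Cconj; simpl. intros H [H1 H2]. apply H. split; auto. lra. Qed.

Lemma fc_conj p T : is_fuss_catalan p T -> is_fuss_catalan p (fun z => Cconj (T (Cconj z))).
Proof.
  intros HT. split; [|split].
  - simpl. replace (Cconj (0,0)) with (RtoC 0) by (unfold Cconj, RtoC; simpl; rewrite Ropp_0; reflexivity).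
    change (RtoC 0) with ((0,0) : Cx). rewrite (fc_T0 p T HT). apply Cconj_1.
  - intros z Hz. rewrite Cpow_eq.
    pose proof (fc_eq p T HT (Cconj z) (slit_conj p z Hz)) as H.
    apply (f_equal Cconj) in H. rewrite Cplus_conj, Cminus_conj, Cmult_conj, Cpow_conj, Cconj_conj, Cconj_1, Cconj_0 in H.
    exact H.
  - intros z Hz e He. destruct (fc_cont p T HT (Cconj z) (slit_conj p z Hz) e He) as [d [Hd Hw]].
    exists d. split; auto. intros w Hsw Hwz.
    change (Cmod (Cconj (T (Cconj w)) - Cconj (T (Cconj z)))%C < e).
    rewrite <- Cminus_conj, Cmod_conj. apply Hw. apply slit_conj; auto.
    rewrite <- Cminus_conj, Cmod_conj. exact Hwz.
Qed.

Lemma G_nonneg_conj p T (z0 : C) : (2 <= p)%nat -> is_fuss_catalan p T -> 0 <= Im z0 ->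
  (0 < Im z0 \/ Re z0 <= 0) -> 0 <= G p (Cconj (T z0)).
Proof.
  intros Hp HT Hz Hor.
  pose proof (G_nonneg p _ (Cconj z0) Hp (fc_conj p T HT)) as H. simpl in H.
  rewrite Cconj_conj in H. apply H.
  - unfold Cconj, Im, Re in *; simpl in *. lra.
  - unfold Cconj, Im, Re in *; simpl in *. destruct Hor; [left; lra| right; auto].
Qed.

Lemma key_trig (alpha beta X : R) : 0 < alpha <= PI / 2 -> -(PI - alpha) <= beta <= PI - alpha -> 0 <= X ->
  sin alpha <= Cmod (1 + RtoC X * cis beta)%C.
Proof.
  intros Ha Hb HX. pose proof PI_RGT_0.
  assert (Hsa : 0 <= sin alpha) by (apply sin_ge_0; lra).
  assert (Hsq : sin alpha ^ 2 <= (1 + X * cos beta) ^ 2 + (X * sin beta) ^ 2).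
  { pose proof (sin2_cos2 beta) as Hsc. unfold Rsqr in Hsc.
    assert (Hsa1 : sin alpha <= 1) by apply SIN_bound.
    destruct (Rle_lt_dec 0 (cos beta)) as [Hc|Hc].
    - assert (sin alpha ^ 2 <= 1) by nra. nra.
    - assert (Hsb : sin alpha <= Rabs (sin beta)).
      { destruct (Rle_lt_dec 0 beta) as [Hb0|Hb0].
        - assert (PI / 2 < beta).
          { destruct (Rle_lt_dec beta (PI/2)); auto. assert (0 <= cos beta) by (apply cos_ge_0; lra). lra. }
          rewrite <- (sin_PI_x beta). rewrite Rabs_pos_eq by (apply sin_ge_0; lra).
          apply sin_incr_1; lra.
        - assert (beta < - (PI / 2)).
          { destruct (Rle_lt_dec (- (PI/2)) beta); auto. assert (0 <= cos beta) by (apply cos_ge_0; lra). lra. }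
          rewrite <- Rabs_Ropp, <- sin_neg, <- (sin_PI_x (- beta)).
          rewrite Rabs_pos_eq by (apply sin_ge_0; lra).
          apply sin_incr_1; lra. }
      assert (sin alpha ^ 2 <= sin beta ^ 2).
      { rewrite <- (pow2_abs (sin beta)). apply pow_incr. lra. }
      assert (Hid : (1 + X * cos beta) ^ 2 + (X * sin beta) ^ 2 = (X + cos beta) ^ 2 + sin beta ^ 2) by nra.
      rewrite Hid. pose proof (pow2_ge_0 (X + cos beta)). lra. }
  unfold Cmod, cis, RtoC, Cplus, Cmult; simpl.
  rewrite <- (sqrt_pow2 (sin alpha)) by lra. apply sqrt_le_1_alt. simpl in Hsq. nra.
Qed.

Lemma bound_core p (alpha R rho a theta : R) (t : C) : (2 <= p)%nat -> 0 < alpha <= PI / 2 -> 0 <= R -> 0 < rho ->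
  t = (RtoC rho * cis a)%C ->
  ((RtoC (-R) * cis theta) * t ^ p - t + 1 = 0)%C ->
  -(PI - alpha) <= theta + INR (p - 1) * a <= PI - alpha ->
  rho * sin alpha <= 1.
Proof.
  intros Hp Ha HR Hr Ht Heq Hb.
  set (E := (1 + RtoC (R * rho ^ (p - 1)) * cis (theta + INR (p - 1) * a))%C).
  assert (Htp : (t ^ p = t * t ^ (p - 1))%C) by (replace p with (S (p - 1)) at 1 by lia; apply Cpow_S).
  assert (Htp1 : (t ^ (p - 1))%C = (RtoC (rho ^ (p - 1)) * cis (INR (p - 1) * a))%C).
  { rewrite Ht, Cpow_mult_l, Cpow_cis, RtoC_pow. reflexivity. }
  assert (HE : (t * E = 1)%C).
  { unfold E. rewrite <- cis_mult, RtoC_mult.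
    replace (RtoC R * RtoC (rho ^ (p - 1)) * (cis theta * cis (INR (p - 1) * a)))%C
      with (RtoC R * cis theta * (RtoC (rho ^ (p - 1)) * cis (INR (p - 1) * a)))%C by ring.
    rewrite <- Htp1. rewrite Htp in Heq.
    replace (RtoC (-R)) with (- RtoC R)%C in Heq by (unfold RtoC, Complex.Copp; simpl; rewrite Ropp_0; reflexivity).
    apply (f_equal (fun w => - w + 1)%C) in Heq.
    replace (- (- RtoC R * cis theta * (t * t ^ (p - 1)) - t + 1) + 1)%C with (t * (1 + RtoC R * cis theta * t ^ (p - 1)))%C in Heq by ring.
    rewrite Heq. ring. }
  apply (f_equal Cmod) in HE. rewrite Cmod_mult, Cmod_1, Ht, Cmod_mult, Cmod_cis, Cmod_R, Rabs_pos_eq in HE by lra.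
  assert (sin alpha <= Cmod E).
  { apply key_trig; auto. apply Rmult_le_pos; auto. apply pow_le; lra. }
  nra.
Qed.

Definition zfun (p:nat) (lam:C) (u:R) : C := (- lam * RtoC (u ^ (2*p-2)))%C.
Definition alpha (p:nat) (eps:R) : R := Rmin (PI / INR p) (Rmin eps (PI/2)).

Lemma alpha_bounds p eps : (2 <= p)%nat -> eps > 0 ->
  0 < alpha p eps /\ alpha p eps <= PI / 2 /\ alpha p eps <= PI / INR p /\ alpha p eps <= eps.
Proof.
  intros Hp He. pose proof (PI_p_bounds p Hp). pose proof PI_RGT_0. unfold alpha.
  pose proof (Rmin_l (PI / INR p) (Rmin eps (PI/2))). pose proof (Rmin_r (PI / INR p) (Rmin eps (PI/2))).
  pose proof (Rmin_l eps (PI/2)). pose proof (Rmin_r eps (PI/2)).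
  repeat split; try lra. apply Rmin_glb_lt; [lra| apply Rmin_glb_lt; lra].
Qed.

Lemma even_pow_nonneg u p : 0 <= u ^ (2*p-2).
Proof.
  replace (2*p-2)%nat with (2*(p-1))%nat by lia. rewrite pow_mult. apply pow_le. nra.
Qed.

Lemma sol_nonzero p (z t : C) : (1 <= p)%nat -> (z * t ^ p - t + 1 = 0)%C -> t <> 0%C.
Proof.
  intros Hp Heq Ht. rewrite Ht in Heq. replace p with (S (p-1)) in Heq by lia.
  rewrite Cpow_S in Heq. replace (z * (0 * 0 ^ (p - 1)) - 0 + 1)%C with (RtoC 1) in Heq by ring.
  injection Heq. lra.
Qed.

Lemma INR_pm1 p : (1 <= p)%nat -> INR (p - 1) = INR p - 1.
Proof. intro. rewrite minus_INR by lia. simpl. ring. Qed.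

Lemma Cconj_polar (rho a : R) : Cconj (RtoC rho * cis a)%C = (RtoC rho * cis (- a))%C.
Proof. unfold Cconj, RtoC, cis, Cmult; simpl. rewrite cos_neg, sin_neg. f_equal; ring. Qed.

Lemma region p T (lam : C) eps u : (2 <= p)%nat -> eps > 0 -> is_fuss_catalan p T -> lam <> (0,0) ->
  arg_bound lam eps ->
  slit_dom p (zfun p lam u) /\ (T (zfun p lam u) : C) <> 0%C /\ 0 <= Re (T (zfun p lam u)) /\
  Cmod (T (zfun p lam u)) * sin (alpha p eps) <= 1.
Proof.
  intros Hp He HT Hlam [theta [Hth [Habs Hpol]]].
  destruct (alpha_bounds p eps Hp He) as [Ha0 [Ha1 [Ha2 Ha3]]].
  pose proof (PI_p_bounds p Hp) as Hpp. pose proof PI_RGT_0.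
  set (r := Cnorm lam) in *.
  assert (Hr : 0 < r).
  { unfold r. change (0 < Cmod lam). apply Cmod_gt_0. intro H'. apply Hlam. exact H'. }
  set (s := u ^ (2*p-2)).
  assert (Hs : 0 <= s) by apply even_pow_nonneg.
  assert (Hz : zfun p lam u = (RtoC (- (r * s)) * cis theta)%C).
  { unfold zfun. fold s. destruct lam as [lr li]. injection Hpol. intros H1 H2.
    unfold RtoC, cis, Cmult, Complex.Copp; simpl. rewrite H1, H2. f_equal; ring. }
  assert (HRe : Re (zfun p lam u) = - (r * s) * cos theta) by (rewrite Hz; apply Re_scal_cis).
  assert (HIm : Im (zfun p lam u) = - (r * s) * sin theta) by (rewrite Hz; apply Im_scal_cis).
  assert (Hrs : 0 <= r * s) by nra.
  assert (HINR : INR (p - 1) * (PI / INR p) = PI - PI / INR p).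
  { rewrite INR_pm1 by lia. field. apply not_0_INR. lia. }
  assert (Habs' : - (PI - eps) <= theta <= PI - eps) by (apply Rabs_le_between in Habs; lra).
  destruct (Rle_lt_dec 0 theta) as [Hth0|Hth0].
  -
    assert (Hsin : 0 <= sin theta) by (apply sin_ge_0; lra).
    assert (Hcase : Im (zfun p lam u) < 0 \/ Re (zfun p lam u) <= 0).
    { destruct (Rlt_le_dec 0 (r * s * sin theta)). left; rewrite HIm; lra.
      right. rewrite HRe. destruct (Req_dec theta 0) as [E|E].
      - subst theta. rewrite cos_0. lra.
      - assert (0 < sin theta) by (apply sin_gt_0; lra).
        assert (Hrs0 : r * s = 0) by nra. rewrite Hrs0. lra. }
    assert (Hsl : slit_dom p (zfun p lam u)).
    { destruct Hcase. apply slit_im; lra. apply slit_re; auto. }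
    assert (Heq := fc_eq p T HT _ Hsl).
    assert (Hne : (T (zfun p lam u) : C) <> 0%C) by (apply (sol_nonzero p (zfun p lam u)); auto; lia).
    assert (HG := G_nonneg p T (zfun p lam u) Hp HT ltac:(rewrite HIm; nra) Hcase).
    unfold G in HG. pose proof (Rmin_l (- Im (T (zfun p lam u))) (Im (om p * T (zfun p lam u))%C)).
    pose proof (Rmin_r (- Im (T (zfun p lam u))) (Im (om p * T (zfun p lam u))%C)).
    destruct (polar_sector p (T (zfun p lam u)) Hp Hne ltac:(lra) ltac:(lra)) as [a [Ha Hta]].
    split; auto. split; auto. split.
    + rewrite Hta, Re_scal_cis. apply Rmult_le_pos. apply Cmod_ge_0. apply cos_ge_0; lra.
    + apply (bound_core p (alpha p eps) (r * s) (Cmod (T (zfun p lam u))) a theta (T (zfun p lam u))); auto.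
      * apply Cmod_gt_0; auto.
      * rewrite <- Hz. exact Heq.
      * assert (INR (p - 1) * a <= 0) by (apply Rmult_le_0_l ; [apply pos_INR| lra]).
        assert (- (PI - PI / INR p) <= INR (p - 1) * a).
        { rewrite <- HINR. rewrite Ropp_mult_distr_r. apply Rmult_le_compat_l. apply pos_INR. lra. }
        lra.
  -
    assert (Hsin : sin theta < 0) by (apply sin_neg_open; lra).
    assert (Hcase : 0 < Im (zfun p lam u) \/ Re (zfun p lam u) <= 0).
    { destruct (Rlt_le_dec 0 (r * s)). left; rewrite HIm; nra.
      right. rewrite HRe. assert (Hrs0 : r * s = 0) by lra. rewrite Hrs0. lra. }
    assert (Hsl : slit_dom p (zfun p lam u)).
    { destruct Hcase. apply slit_im; lra. apply slit_re; auto. }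
    assert (Heq := fc_eq p T HT _ Hsl).
    assert (Hne : (T (zfun p lam u) : C) <> 0%C) by (apply (sol_nonzero p (zfun p lam u)); auto; lia).
    assert (HG := G_nonneg_conj p T (zfun p lam u) Hp HT ltac:(rewrite HIm; nra) Hcase).
    unfold G in HG.
    set (tc := Cconj (T (zfun p lam u))) in *.
    pose proof (Rmin_l (- Im tc) (Im (om p * tc)%C)).
    pose proof (Rmin_r (- Im tc) (Im (om p * tc)%C)).
    assert (Hnec : tc <> 0%C).
    { intro E. apply Hne. rewrite <- (Cconj_conj (T (zfun p lam u))). fold tc. rewrite E. apply Cconj_0. }
    destruct (polar_sector p tc Hp Hnec ltac:(lra) ltac:(lra)) as [a [Ha Hta]].
    assert (Hmod : Cmod tc = Cmod (T (zfun p lam u))) by apply Cmod_conj.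
    assert (Ht : (T (zfun p lam u) : C) = (RtoC (Cmod (T (zfun p lam u))) * cis (- a))%C).
    { assert (E : (T (zfun p lam u) : C) = Cconj tc) by (unfold tc; symmetry; apply Cconj_conj).
      rewrite E at 1. rewrite Hmod in Hta. rewrite Hta. apply Cconj_polar. }
    split; auto. split; auto. split.
    + rewrite Ht, Re_scal_cis. apply Rmult_le_pos. apply Cmod_ge_0. apply cos_ge_0; lra.
    + apply (bound_core p (alpha p eps) (r * s) (Cmod (T (zfun p lam u))) (- a) theta (T (zfun p lam u))); auto.
      * apply Cmod_gt_0; auto.
      * rewrite <- Hz. exact Heq.
      * assert (0 <= INR (p - 1) * - a) by (apply Rmult_le_pos ; [apply pos_INR| lra]).
        assert (INR (p - 1) * - a <= PI - PI / INR p).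
        { rewrite <- HINR. apply Rmult_le_compat_l. apply pos_INR. lra. }
        lra.
Qed.

Lemma Csqrt_mul (t : C) : 0 <= Re t ->
  (Csqrt t * Csqrt t = t)%C /\ Cmod (Csqrt t) ^ 2 = Cmod t /\ Cmod (Csqrt t) <= 2 * Re (Csqrt t).
Proof.
  intros Hx. destruct t as [x y]. unfold Re in Hx; simpl in Hx.
  set (N := Cnorm (x, y)).
  assert (HN2 : N ^ 2 = x ^ 2 + y ^ 2) by (unfold N; change (Cmod (x,y) ^ 2 = x^2+y^2); apply Cmod2_alt).
  assert (HN0 : 0 <= N) by (unfold N; apply Cmod_ge_0).
  assert (Hxn : x <= N) by (destruct (Rle_lt_dec x N); auto; nra).
  assert (Hxn' : - x <= N) by (destruct (Rle_lt_dec (-x) N); auto; nra).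
  set (A := sqrt ((N + x) / 2)). set (B := sqrt ((N - x) / 2)).
  assert (HA : A * A = (N + x) / 2) by (apply sqrt_sqrt; lra).
  assert (HB : B * B = (N - x) / 2) by (apply sqrt_sqrt; lra).
  assert (HA0 : 0 <= A) by apply sqrt_pos. assert (HB0 : 0 <= B) by apply sqrt_pos.
  assert (HAB : A * B = Rabs y / 2).
  { unfold A, B. rewrite <- sqrt_mult by lra.
    replace ((N + x) / 2 * ((N - x) / 2)) with (Rsqr (y / 2)) by (unfold Rsqr; nra).
    rewrite sqrt_Rsqr_abs. unfold Rdiv. rewrite Rabs_mult, (Rabs_pos_eq (/2)) by lra. reflexivity. }
  unfold Csqrt. fold N. simpl fst. simpl snd. fold A. fold B.
  set (sg := if Rlt_dec y 0 then -1 else 1).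
  assert (Hsg : sg * sg = 1) by (unfold sg; destruct Rlt_dec; ring).
  assert (Hsgy : sg * Rabs y = y) by (unfold sg; destruct Rlt_dec; [rewrite Rabs_left by lra; ring| rewrite Rabs_pos_eq by lra; ring]).
  split; [|split].
  - unfold Cmult; simpl. f_equal.
    + replace (A * A - sg * B * (sg * B)) with (A * A - (sg * sg) * (B * B)) by ring. rewrite Hsg, HA, HB. field.
    + replace (A * (sg * B) + sg * B * A) with (2 * sg * (A * B)) by ring. rewrite HAB.
      replace (2 * sg * (Rabs y / 2)) with (sg * Rabs y) by field. exact Hsgy.
  - rewrite Cmod2_alt. unfold Re, Im; cbn [fst snd]. replace ((sg * B) ^ 2) with ((sg * sg) * (B * B)) by ring.
    rewrite Hsg. replace (A ^ 2) with (A * A) by ring. rewrite HA, HB. change (Cmod (x,y)) with N. field.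
  - unfold Re; simpl. apply (pow_le_inv _ _ 2). apply Cmod_ge_0. lra. lia.
    rewrite Cmod2_alt. unfold Re, Im; cbn [fst snd]. replace ((sg * B) ^ 2) with ((sg * sg) * (B * B)) by ring.
    rewrite Hsg. nra.
Qed.

Lemma factor_pow (a b : C) (M : R) n : Cmod a <= M -> Cmod b <= M ->
  exists Sm : C, (a ^ n - b ^ n = (a - b) * Sm)%C /\ Cmod Sm <= INR n * M ^ (n - 1).
Proof.
  intros Ha Hb. assert (HM : 0 <= M) by (pose proof (Cmod_ge_0 a); lra).
  induction n.
  - exists (RtoC 0). split. simpl. ring. rewrite Cmod_0. simpl. lra.
  - destruct IHn as [Sm [HS HSb]]. exists (a * Sm + b ^ n)%C. split.
    + rewrite !Cpow_S. replace (a * a ^ n - b * b ^ n)%C with (a * (a ^ n - b ^ n) + (a - b) * b ^ n)%C by ring.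
      rewrite HS. ring.
    + eapply Rle_trans; [apply Cmod_triangle|]. rewrite Cmod_mult, Cmod_pow.
      assert (Cmod a * Cmod Sm <= M * (INR n * M ^ (n - 1))).
      { apply Rmult_le_compat; auto; apply Cmod_ge_0. }
      assert (Cmod b ^ n <= M ^ n) by (apply pow_incr; split; auto; apply Cmod_ge_0).
      assert (M * (INR n * M ^ (n - 1)) = INR n * M ^ n).
      { destruct n. simpl. ring. replace (S n - 1)%nat with n by lia. simpl. ring. }
      rewrite S_INR. replace (S n - 1)%nat with n by lia. nra.
Qed.

Lemma inv_re_bound (f : C) : f <> 0%C -> Cmod f <= 2 * Re f -> Cmod (/ f)%C <= 2 * Re (/ f)%C.
Proof.
  intros Hf H. rewrite Cmod_inv by auto.
  assert (Hm : 0 < Cmod f) by (apply Cmod_gt_0; auto).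
  assert (HRe : Re (/ f)%C = Re f / Cmod f ^ 2) by (rewrite Cmod2_alt; destruct f; reflexivity).
  rewrite HRe. apply (Rmult_le_reg_r (Cmod f ^ 2)). apply pow_lt; lra.
  replace (/ Cmod f * Cmod f ^ 2) with (Cmod f) by (field; lra).
  replace (2 * (Re f / Cmod f ^ 2) * Cmod f ^ 2) with (2 * Re f) by (field; lra). lra.
Qed.

Lemma Q_bound (X a D A n Mn : R) : 0 < A -> 0 <= a -> 0 <= n -> 0 <= X -> X <= n * Mn -> a * Mn <= A ^ 2 + 1 ->
  A / 2 <= D -> X * a / D <= 2 * n * (A + / A).
Proof.
  intros HA Ha Hn HX HXM HaM HD.
  assert (HD0 : 0 < D) by lra.
  assert (H1 : X * a <= n * (A ^ 2 + 1)).
  { assert (X * a <= n * Mn * a) by (apply Rmult_le_compat_r; auto).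
    assert (n * Mn * a = n * (a * Mn)) by ring. nra. }
  assert (H2 : / D <= 2 / A).
  { replace (2 / A) with (/ (A / 2)) by (field; lra). apply Rinv_le_contravar; lra. }
  unfold Rdiv. replace (2 * n * (A + / A)) with (n * (A ^ 2 + 1) * (2 / A)) by (field; lra).
  apply Rmult_le_compat; try lra. apply Rmult_le_pos; auto. left; apply Rinv_0_lt_compat; lra.
Qed.

Lemma sqrt_mod_le (F m : R) : 0 < m <= 1 -> 0 <= F -> F ^ 2 * m <= 1 -> F <= / m.
Proof.
  intros Hm HF H. destruct (Rle_lt_dec F (/ m)); auto.
  assert (1 <= / m) by (rewrite <- Rinv_1; apply Rinv_le_contravar; lra).
  assert (F * m > 1).
  { apply (Rmult_lt_compat_r m) in r; [|lra]. rewrite Rinv_l in r by lra. lra. }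
  nra.
Qed.

Section Main.
Variables (p : nat) (lam : C) (u1 u2 : R) (t1 t2 : C) (m : R).
Hypotheses (Hp : (2 <= p)%nat) (Hm : 0 < m <= 1) (Ht1 : t1 <> 0%C) (Ht2 : t2 <> 0%C)
  (Hr1 : 0 <= Re t1) (Hr2 : 0 <= Re t2) (Hb1 : Cmod t1 * m <= 1) (Hb2 : Cmod t2 * m <= 1)
  (He1 : ((- lam * RtoC (u1 ^ (2*p-2))) * t1 ^ p - t1 + 1 = 0)%C)
  (He2 : ((- lam * RtoC (u2 ^ (2*p-2))) * t2 ^ p - t2 + 1 = 0)%C).

Lemma lam_w (u : R) (t : C) : t <> 0%C -> 0 <= Re t ->
  ((- lam * RtoC (u ^ (2*p-2))) * t ^ p - t + 1 = 0)%C ->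
  (lam * (RtoC u * Csqrt t) ^ (2*p-2) = / t - 1)%C.
Proof.
  intros Ht Hr He. destruct (Csqrt_mul t Hr) as [Hff _].
  rewrite Cpow_mult_l, <- RtoC_pow.
  replace (2*p-2)%nat with (2*(p-1))%nat by lia.
  rewrite Cpow_mult_r. replace (Csqrt t ^ 2)%C with (Csqrt t * Csqrt t)%C by ring. rewrite Hff.
  replace (2*(p-1))%nat with (2*p-2)%nat by lia.
  assert (Htp : (t ^ p = t * t ^ (p - 1))%C) by (replace p with (S (p - 1)) at 1 by lia; apply Cpow_S).
  rewrite Htp in He.
  assert (X : (lam * RtoC (u ^ (2*p-2)) * t ^ (p - 1) * t = 1 - t)%C).
  { apply (f_equal (fun w => - w + 1 - t)%C) in He.
    replace (- (- lam * RtoC (u ^ (2 * p - 2)) * (t * t ^ (p - 1)) - t + 1) + 1 - t)%C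
      with (lam * RtoC (u ^ (2*p-2)) * t ^ (p - 1) * t)%C in He by ring.
    rewrite He. ring. }
  replace (lam * (RtoC (u ^ (2 * p - 2)) * t ^ (p - 1)))%C
    with ((lam * RtoC (u ^ (2*p-2)) * t ^ (p - 1) * t) * / t)%C by (field; auto).
  rewrite X. field. auto.
Qed.

Lemma main_est :
  Rabs (u1 - u2) <= Cmod (RtoC u1 * Csqrt t1 - RtoC u2 * Csqrt t2)%C *
     (2 * INR (2*p-2) / m + (1 + 2 * INR (2*p-2)) * Rmax (/ Cmod (Csqrt t1)) (/ Cmod (Csqrt t2))).
Proof.
  set (n := (2*p-2)%nat).
  destruct (Csqrt_mul t1 Hr1) as [Hff1 [Hmf1 Hre1]].
  destruct (Csqrt_mul t2 Hr2) as [Hff2 [Hmf2 Hre2]].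
  set (f1 := (Csqrt t1 : C)) in *. set (f2 := (Csqrt t2 : C)) in *.
  assert (Hf1 : f1 <> 0%C) by (intro E; apply Ht1; rewrite <- Hff1, E; ring).
  assert (Hf2 : f2 <> 0%C) by (intro E; apply Ht2; rewrite <- Hff2, E; ring).
  set (g1 := (/ f1)%C). set (g2 := (/ f2)%C).
  set (w1 := (RtoC u1 * f1)%C). set (w2 := (RtoC u2 * f2)%C).
  assert (Hlw1 : (lam * w1 ^ n = / t1 - 1)%C) by (apply lam_w; auto).
  assert (Hlw2 : (lam * w2 ^ n = / t2 - 1)%C) by (apply lam_w; auto).
  assert (Hgg1 : (g1 * g1 = / t1)%C) by (unfold g1; rewrite <- Hff1; field; auto).
  assert (Hgg2 : (g2 * g2 = / t2)%C) by (unfold g2; rewrite <- Hff2; field; auto).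
  set (M := Rmax (Cmod w1) (Cmod w2)).
  destruct (factor_pow w1 w2 M n (Rmax_l _ _) (Rmax_r _ _)) as [Sm [HS HSb]].
  assert (Hkey : ((g1 - g2) * (g1 + g2) = lam * (w1 - w2) * Sm)%C).
  { replace ((g1 - g2) * (g1 + g2))%C with (g1 * g1 - g2 * g2)%C by ring.
    rewrite Hgg1, Hgg2. replace (/ t1 - / t2)%C with ((/ t1 - 1) - (/ t2 - 1))%C by ring.
    rewrite <- Hlw1, <- Hlw2. replace (lam * (w1 - w2) * Sm)%C with (lam * ((w1 - w2) * Sm))%C by ring.
    rewrite <- HS. ring. }
  assert (Hg1r : Cmod g1 <= 2 * Re g1) by (apply inv_re_bound; auto).
  assert (Hg2r : Cmod g2 <= 2 * Re g2) by (apply inv_re_bound; auto).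
  assert (Hmg1 : Cmod g1 = / Cmod f1) by (apply Cmod_inv; auto).
  assert (Hmg2 : Cmod g2 = / Cmod f2) by (apply Cmod_inv; auto).
  assert (Hcf1 : 0 < Cmod f1) by (apply Cmod_gt_0; auto).
  assert (Hcf2 : 0 < Cmod f2) by (apply Cmod_gt_0; auto).
  assert (Hsum : (Cmod g1 + Cmod g2) / 2 <= Cmod (g1 + g2)%C).
  { pose proof (re_le_Cmod (g1 + g2)%C). apply Rabs_le_between in H.
    assert (Re (g1 + g2)%C = Re g1 + Re g2) by (destruct g1, g2; reflexivity). lra. }
  assert (Hg1p : 0 < Cmod g1) by (rewrite Hmg1; apply Rinv_0_lt_compat; lra).
  assert (Hg2p : 0 < Cmod g2) by (rewrite Hmg2; apply Rinv_0_lt_compat; lra).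
  assert (Hgs : (g1 + g2)%C <> 0%C).
  { intro E. rewrite E, Cmod_0 in Hsum. lra. }
  assert (Hid : RtoC (u1 - u2) = ((w1 - w2) * (g1 + w2 * lam * Sm / (g1 + g2)))%C).
  { assert (Hd : (g1 - g2 = lam * (w1 - w2) * Sm / (g1 + g2))%C).
    { rewrite <- Hkey. field. auto. }
    replace (RtoC (u1 - u2)) with (w1 * g1 - w2 * g2)%C.
    - replace (w1 * g1 - w2 * g2)%C with ((w1 - w2) * g1 + w2 * (g1 - g2))%C by ring.
      rewrite Hd. field. auto.
    - unfold w1, w2, g1, g2. rewrite RtoC_minus. field. auto. }
  rewrite <- Cmod_R, Hid, Cmod_mult.
  apply Rmult_le_compat_l. apply Cmod_ge_0.
  eapply Rle_trans; [apply Cmod_triangle|].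
  unfold Complex.Cdiv. rewrite !Cmod_mult, Cmod_inv by auto.
  set (Gm := Rmax (/ Cmod f1) (/ Cmod f2)).
  assert (HG1 : Cmod g1 <= Gm) by (rewrite Hmg1; apply Rmax_l).
  assert (HG2 : Cmod g2 <= Gm) by (rewrite Hmg2; apply Rmax_r).
  assert (HF1 : Cmod f1 <= / m) by (apply sqrt_mod_le; auto; [apply Cmod_ge_0| rewrite Hmf1; auto]).
  assert (HF2 : Cmod f2 <= / m) by (apply sqrt_mod_le; auto; [apply Cmod_ge_0| rewrite Hmf2; auto]).
  assert (Hn0 : 0 <= INR n) by apply pos_INR.
  assert (HX : Cmod w2 * Cmod Sm <= INR n * M ^ n).
  { assert (Cmod w2 <= M) by apply Rmax_r.
    assert (0 <= M) by (eapply Rle_trans; [apply Cmod_ge_0| exact H]).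
    assert (Cmod w2 * Cmod Sm <= M * (INR n * M ^ (n - 1))) by (apply Rmult_le_compat; auto; apply Cmod_ge_0).
    replace (M * (INR n * M ^ (n - 1))) with (INR n * M ^ n) in H1; auto.
    replace n with (S (n - 1)) at 2 by (unfold n; lia). simpl. ring. }
  assert (Hinv : forall (t : C) (f g : C), t <> 0%C -> Cmod f ^ 2 = Cmod t -> Cmod g = / Cmod f -> 0 < Cmod f ->
      Cmod (/ t - 1)%C <= Cmod g ^ 2 + 1).
  { intros t f g Ht Hft Hg Hf. eapply Rle_trans. 
    replace (/ t - 1)%C with (/ t + - (1))%C by ring. apply Cmod_triangle.
    rewrite Cmod_opp, Cmod_1, Cmod_inv, <- Hft, Hg by auto.
    right. field. lra. }
  assert (Hlam0 : 0 <= Cmod lam) by apply Cmod_ge_0.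
  assert (HQ : Cmod w2 * Cmod lam * Cmod Sm * / Cmod (g1 + g2)%C <= 2 * INR n * (Gm + / m)).
  { replace (Cmod w2 * Cmod lam * Cmod Sm * / Cmod (g1 + g2)%C) with ((Cmod w2 * Cmod Sm) * Cmod lam / Cmod (g1 + g2)%C) by (unfold Rdiv; ring).
    assert (HX0 : 0 <= Cmod w2 * Cmod Sm) by (apply Rmult_le_pos; apply Cmod_ge_0).
    destruct (Rle_lt_dec (Cmod w2) (Cmod w1)) as [Hw|Hw].
    - assert (HM : M = Cmod w1) by (unfold M; apply Rmax_left; auto).
      assert (HaM : Cmod lam * M ^ n <= Cmod g1 ^ 2 + 1).
      { rewrite HM, <- Cmod_pow, <- Cmod_mult, Hlw1. apply (Hinv t1 f1 g1); auto. }
      assert (HD : Cmod g1 / 2 <= Cmod (g1 + g2)%C) by lra.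
      eapply Rle_trans. apply (Q_bound (Cmod w2 * Cmod Sm) (Cmod lam) (Cmod (g1+g2)%C) (Cmod g1) (INR n) (M ^ n)); auto.
      apply Rmult_le_compat_l. lra. rewrite Hmg1, Rinv_inv. lra.
    - assert (HM : M = Cmod w2) by (unfold M; apply Rmax_right; lra).
      assert (HaM : Cmod lam * M ^ n <= Cmod g2 ^ 2 + 1).
      { rewrite HM, <- Cmod_pow, <- Cmod_mult, Hlw2. apply (Hinv t2 f2 g2); auto. }
      assert (HD : Cmod g2 / 2 <= Cmod (g1 + g2)%C) by lra.
      eapply Rle_trans. apply (Q_bound (Cmod w2 * Cmod Sm) (Cmod lam) (Cmod (g1+g2)%C) (Cmod g2) (INR n) (M ^ n)); auto.
      apply Rmult_le_compat_l. lra. rewrite Hmg2, Rinv_inv. lra. }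
  fold n. fold Gm. lra.
Qed.
End Main.

Definition Lfun (p : nat) (lam : C) (u : R) : R :=
  rpow (Cnorm lam) (/ (2 * INR p)) * rpow (Rabs u) (1 - / INR p).

Lemma rpow_nonneg x y : 0 <= rpow x y.
Proof. unfold rpow. destruct Req_EM_T. lra. unfold Rpower. left; apply exp_pos. Qed.

Lemma Rpower_pow_mult x y k : 0 < x -> Rpower x y ^ k = Rpower x (y * INR k).
Proof.
  intros Hx. rewrite <- Rpower_pow by (unfold Rpower; apply exp_pos). apply Rpower_mult.
Qed.

Lemma Lfun_pow p lam u : (2 <= p)%nat -> 0 < Cnorm lam ->
  Lfun p lam u ^ (2 * p) = Cnorm lam * Rabs u ^ (2 * p - 2).
Proof.
  intros Hp Hr. unfold Lfun. rewrite Rpow_mult_distr.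
  assert (HINR : 0 < INR p) by (apply lt_0_INR; lia).
  f_equal.
  - unfold rpow. destruct Req_EM_T; [lra|]. rewrite Rpower_pow_mult by auto.
    replace (/ (2 * INR p) * INR (2 * p)) with 1. apply Rpower_1; auto.
    rewrite mult_INR. simpl. field. lra.
  - unfold rpow. destruct Req_EM_T as [E|E].
    + rewrite E. rewrite !pow_i by lia. reflexivity.
    + assert (0 < Rabs u) by (pose proof (Rabs_pos u); lra).
      rewrite Rpower_pow_mult by auto. rewrite <- Rpower_pow by auto. f_equal.
      rewrite minus_INR by lia. rewrite mult_INR. simpl. field. lra.
Qed.

Lemma g_bound p (lam : C) (u : R) (t : C) : (2 <= p)%nat -> lam <> 0%C -> t <> 0%C -> 0 <= Re t ->
  ((- lam * RtoC (u ^ (2*p-2))) * t ^ p - t + 1 = 0)%C ->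
  / Cmod (Csqrt t) <= 2 * Rmax 1 (Lfun p lam u).
Proof.
  intros Hp Hlam Ht Hr He.
  destruct (Csqrt_mul t Hr) as [Hff [Hmf _]].
  assert (Hct : 0 < Cmod t) by (apply Cmod_gt_0; auto).
  assert (Hcf : 0 < Cmod (Csqrt t)) by (apply Cmod_gt_0; intro E; apply Ht; rewrite <- Hff, E; ring).
  set (A := / Cmod (Csqrt t)).
  assert (HA0 : 0 < A) by (apply Rinv_0_lt_compat; auto).
  assert (HA2 : A ^ 2 = / Cmod t) by (unfold A; rewrite <- Hmf; field; lra).
  assert (HL0 : 0 <= Lfun p lam u) by (apply Rmult_le_pos; apply rpow_nonneg).
  pose proof (Rmax_l 1 (Lfun p lam u)). pose proof (Rmax_r 1 (Lfun p lam u)).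
  destruct (Rle_lt_dec (/2) (Cmod t)) as [Hbig|Hsmall].
  - assert (A ^ 2 <= 2 ^ 2).
    { rewrite HA2. replace (2 ^ 2) with 4 by ring. rewrite <- (Rinv_inv 4).
      apply Rinv_le_contravar. lra. lra. }
    assert (A <= 2) by (apply (pow_le_inv _ _ 2); auto; lra).
    lra.
  - assert (Hz : (- lam * RtoC (u ^ (2*p-2)) * t ^ p = t - 1)%C).
    { rewrite <- (Cplus_0_l (t - 1)%C). rewrite <- He. ring. }
    apply (f_equal Cmod) in Hz. rewrite !Cmod_mult, Cmod_opp, Cmod_R, Cmod_pow in Hz.
    assert (Ht1 : 1 - Cmod t <= Cmod (t - 1)%C).
    { pose proof (Cmod_triangle (t - 1)%C (- t)%C). rewrite Cmod_opp in H1.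
      replace (t - 1 + - t)%C with (- (1))%C in H1 by ring. rewrite Cmod_opp, Cmod_1 in H1. lra. }
    assert (Hr0 : 0 < Cnorm lam) by (change (0 < Cmod lam); apply Cmod_gt_0; auto).
    rewrite <- RPow_abs in Hz.
    change (Cmod lam) with (Cnorm lam) in Hz.
    rewrite <- (Lfun_pow p lam u Hp Hr0) in Hz.
    set (L := Lfun p lam u) in *.
    assert (Hprod : / 2 <= L ^ (2 * p) * Cmod t ^ p) by lra.
    assert (HAp : A ^ (2 * p) <= (2 * L) ^ (2 * p)).
    { rewrite pow_mult, HA2, Rpow_mult_distr.
      assert (Hctp : 0 < Cmod t ^ p) by (apply pow_lt; auto).
      rewrite pow_inv.
      assert (H2 : 2 <= 2 ^ (2 * p)).
      { replace 2 with (2 ^ 1) at 1 by ring. apply Rle_pow; lra || lia. }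
      assert (HL2 : 0 <= L ^ (2 * p)) by (apply pow_le; auto).
      apply (Rmult_le_reg_r (Cmod t ^ p)); auto.
      rewrite Rinv_l by lra. nra. }
    assert (A <= 2 * L) by (apply (pow_le_inv _ _ (2 * p)); auto; lra || lia).
    lra.
Qed.

Lemma deriv_part (H : R -> C) (x : R) (d : C) (Q0 dl : R) : 0 < Q0 -> 0 < dl ->
  has_cderiv H x d ->
  (forall e, 0 < e < dl -> e <= Cmod (H (x + e)%R - H x)%C * Q0) ->
  1 <= 2 * Cmod d * Q0.
Proof.
  intros HQ Hdl [H1 H2] Hb.
  destruct (Rle_lt_dec 1 (2 * Cmod d * Q0)) as [|Hlt]; auto. exfalso.
  set (eps1 := (1 - 2 * Cmod d * Q0) / (4 * Q0)).
  assert (He1 : 0 < eps1) by (unfold eps1; apply Rdiv_lt_0_compat; lra).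
  destruct (H1 eps1 He1) as [d1 Hd1]. destruct (H2 eps1 He1) as [d2 Hd2].
  set (e := Rmin dl (Rmin d1 d2) / 2).
  assert (Hmin : 0 < Rmin dl (Rmin d1 d2)) by (repeat apply Rmin_glb_lt; auto; apply cond_pos).
  assert (He : 0 < e) by (unfold e; lra).
  assert (Hedl : e < dl) by (unfold e; pose proof (Rmin_l dl (Rmin d1 d2)); lra).
  assert (Hed1 : Rabs e < d1) by (rewrite Rabs_pos_eq by lra; unfold e; pose proof (Rmin_r dl (Rmin d1 d2)); pose proof (Rmin_l d1 d2); lra).
  assert (Hed2 : Rabs e < d2) by (rewrite Rabs_pos_eq by lra; unfold e; pose proof (Rmin_r dl (Rmin d1 d2)); pose proof (Rmin_r d1 d2); lra).
  specialize (Hd1 e ltac:(lra) Hed1). specialize (Hd2 e ltac:(lra) Hed2).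
  pose proof (Hb e (conj He Hedl)) as Hbe.
  assert (Hre : Rabs (fst d) <= Cmod d) by apply re_le_Cmod.
  assert (Him : Rabs (snd d) <= Cmod d) by (apply im_le_Cmod').
  set (a1 := (fst (H (x + e)) - fst (H x)) / e) in *.
  set (a2 := (snd (H (x + e)) - snd (H x)) / e) in *.
  assert (Hc : Cmod (H (x + e)%R - H x)%C <= e * (Rabs a1 + Rabs a2)).
  { eapply Rle_trans; [apply Cmod_le_abs|].
    replace (Re (H (x + e)%R - H x)%C) with (e * a1) by (unfold a1, Re; destruct (H (x+e)), (H x); simpl; field; lra).
    replace (Im (H (x + e)%R - H x)%C) with (e * a2) by (unfold a2, Im; destruct (H (x+e)), (H x); simpl; field; lra).
    rewrite !Rabs_mult, Rabs_pos_eq by lra. lra. }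
  assert (Ha1 : Rabs a1 <= Cmod d + eps1) by (pose proof (Rabs_triang_inv a1 (fst d)); lra).
  assert (Ha2 : Rabs a2 <= Cmod d + eps1) by (pose proof (Rabs_triang_inv a2 (snd d)); lra).
  assert (e <= e * (2 * Cmod d + 2 * eps1) * Q0).
  { eapply Rle_trans; [exact Hbe|]. apply Rmult_le_compat_r; [lra|]. eapply Rle_trans; [exact Hc|]. apply Rmult_le_compat_l; lra. }
  assert (1 <= (2 * Cmod d + 2 * eps1) * Q0).
  { apply (Rmult_le_reg_l e); auto. lra. }
  assert ((2 * Cmod d + 2 * eps1) * Q0 = 2 * Cmod d * Q0 + (1 - 2 * Cmod d * Q0) / 2) by (unfold eps1; field; lra).
  lra.
Qed.

Lemma t_cont p T (lam : C) eps mi : (2 <= p)%nat -> eps > 0 -> is_fuss_catalan p T -> lam <> (0,0) ->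
  arg_bound lam eps ->
  exists dl, 0 < dl /\ forall u, Rabs (u - mi) < dl ->
    Cmod (T (zfun p lam mi)) / 4 <= Cmod (T (zfun p lam u)).
Proof.
  intros Hp He HT Hlam Harg.
  destruct (region p T lam eps mi Hp He HT Hlam Harg) as [Hsl [Hne _]].
  assert (Ht0 : 0 < Cmod (T (zfun p lam mi))) by (apply Cmod_gt_0; auto).
  destruct (fc_cont p T HT _ Hsl (3/4 * Cmod (T (zfun p lam mi)))) as [d1 [Hd1 Hw]]. lra.
  pose proof (derivable_continuous_pt _ _ (derivable_pt_pow (2*p-2) mi)) as Hc.
  assert (Hl : 0 <= Cmod lam) by apply Cmod_ge_0.
  destruct (Hc (d1 / (Cmod lam + 1))) as [dl [Hdl Hdlp]]. apply Rdiv_lt_0_compat; lra.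
  exists dl. split; auto. intros u Hu.
  destruct (Req_dec u mi) as [Eu|Eu]. { subst u. lra. }
  destruct (region p T lam eps u Hp He HT Hlam Harg) as [Hslu _].
  assert (Hpow : Rabs (u ^ (2*p-2) - mi ^ (2*p-2)) < d1 / (Cmod lam + 1)).
  { apply (Hdlp u). split; [split; [exact I| auto]| exact Hu]. }
  assert (Hz : Cmod (zfun p lam u - zfun p lam mi)%C < d1).
  { unfold zfun. replace (- lam * RtoC (u ^ (2 * p - 2)) - - lam * RtoC (mi ^ (2 * p - 2)))%C
      with (- lam * RtoC (u ^ (2 * p - 2) - mi ^ (2 * p - 2)))%C by (rewrite RtoC_minus; ring).
    rewrite Cmod_mult, Cmod_opp, Cmod_R.
    apply (Rmult_lt_compat_r (Cmod lam + 1)) in Hpow; [|lra].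
    replace (d1 / (Cmod lam + 1) * (Cmod lam + 1)) with d1 in Hpow by (field; lra).
    pose proof (Rabs_pos (u ^ (2 * p - 2) - mi ^ (2 * p - 2))). nra. }
  specialize (Hw _ Hslu Hz).
  set (tu := (T (zfun p lam u) : C)) in *. set (t0 := (T (zfun p lam mi) : C)) in *.
  pose proof (Cmod_triangle tu (t0 - tu)%C) as Htri.
  replace (tu + (t0 - tu))%C with t0 in Htri by ring.
  rewrite <- (Cmod_opp (t0 - tu)%C) in Htri. replace (- (t0 - tu))%C with (tu - t0)%C in Htri by ring.
  lra.
Qed.

Theorem lemma3p1 :
  forall (p : nat), (2 <= p)%nat ->
  forall eps : R, eps > 0 ->
  exists C : R,
    forall (T : Cx -> Cx), is_fuss_catalan p T ->
    forall lam : Cx, lam <> (0, 0) -> arg_bound lam eps ->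
    forall mi mj : R,
      (mi <> mj ->
         Cnorm (Cdiv (CofR (mi - mj)) (Csub (h_lam p T lam mi) (h_lam p T lam mj)))
           <= C * Lambda p lam mi mj) /\
      (mi = mj -> forall d : Cx, has_cderiv (h_lam p T lam) mi d ->
         Cnorm (Cinv d) <= C * Lambda p lam mi mj).
Proof.
  intros p Hp eps He.
  set (n := INR (2 * p - 2)).
  set (m := sin (alpha p eps)).
  destruct (alpha_bounds p eps Hp He) as [Ha0 [Ha1 [Ha2 Ha3]]].
  assert (Hm : 0 < m <= 1) by (unfold m; split; [apply sin_gt_0; pose proof PI_RGT_0; lra| apply SIN_bound]).
  assert (Hn : 0 <= n) by apply pos_INR.
  exists (4 * n / m + 8 * (1 + 2 * n)).
  intros T HT lam Hlam Harg mi mj.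
  assert (Hlam' : (lam : C) <> 0%C) by exact Hlam.
  assert (Hreg := fun u => region p T lam eps u Hp He HT Hlam Harg).
  assert (Heq := fun u => fc_eq p T HT (zfun p lam u) (proj1 (Hreg u))).
  assert (HLam1 : 1 <= Lambda p lam mi mj) by apply Rmax_l.
  assert (HLi : Rmax 1 (Lfun p lam mi) <= Lambda p lam mi mj).
  { unfold Lambda. apply Rmax_lub. apply Rmax_l. eapply Rle_trans; [|apply Rmax_r]. apply Rmax_l. }
  assert (HLj : Rmax 1 (Lfun p lam mj) <= Lambda p lam mi mj).
  { unfold Lambda. apply Rmax_lub. apply Rmax_l. eapply Rle_trans; [|apply Rmax_r]. apply Rmax_r. }
  assert (Hgb : forall u, / Cmod (Csqrt (T (zfun p lam u))) <= 2 * Rmax 1 (Lfun p lam u)).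
  { intro u. destruct (Hreg u) as [_ [Hne [Hre _]]]. apply g_bound; auto. apply (Heq u). }
  assert (Hmain : forall u1 u2, Rabs (u1 - u2) <= Cmod (h_lam p T lam u1 - h_lam p T lam u2)%C *
     (2 * n / m + (1 + 2 * n) * Rmax (/ Cmod (Csqrt (T (zfun p lam u1)))) (/ Cmod (Csqrt (T (zfun p lam u2)))))).
  { intros u1 u2. destruct (Hreg u1) as [_ [Hne1 [Hre1 Hb1]]]. destruct (Hreg u2) as [_ [Hne2 [Hre2 Hb2]]].
    apply (main_est p lam u1 u2 (T (zfun p lam u1)) (T (zfun p lam u2)) m); auto.
    apply (Heq u1). apply (Heq u2). }
  split.
  - intros Hij.
    specialize (Hmain mi mj).
    set (K := 2 * n / m + (1 + 2 * n) * Rmax (/ Cmod (Csqrt (T (zfun p lam mi)))) (/ Cmod (Csqrt (T (zfun p lam mj))))) in *.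
    assert (HK : K <= (4 * n / m + 8 * (1 + 2 * n)) * Lambda p lam mi mj).
    { unfold K. assert (Rmax (/ Cmod (Csqrt (T (zfun p lam mi)))) (/ Cmod (Csqrt (T (zfun p lam mj)))) <= 2 * Lambda p lam mi mj).
      { apply Rmax_lub. pose proof (Hgb mi); lra. pose proof (Hgb mj); lra. }
      assert (0 <= n / m) by (apply Rdiv_le_0_compat; lra).
      assert (2 * n / m = 2 * (n / m)) by (unfold Rdiv; ring).
      assert (4 * n / m = 4 * (n / m)) by (unfold Rdiv; ring).
      nra. }
    change (Cmod (RtoC (mi - mj) / (h_lam p T lam mi - h_lam p T lam mj))%C <= (4 * n / m + 8 * (1 + 2 * n)) * Lambda p lam mi mj).
    assert (Hw : (h_lam p T lam mi - h_lam p T lam mj : C)%C <> 0%C).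
    { intro E. rewrite E, Cmod_0, Rmult_0_l in Hmain. apply Hij. pose proof (Rabs_pos (mi - mj)).
      assert (Rabs (mi - mj) = 0) by lra. apply Rabs_eq_0 in H0. lra. }
    rewrite Cmod_div, Cmod_R by auto.
    assert (Hcw : 0 < Cmod (h_lam p T lam mi - h_lam p T lam mj)%C) by (apply Cmod_gt_0; auto).
    apply (Rle_trans _ K); auto.
    apply (Rmult_le_reg_r (Cmod (h_lam p T lam mi - h_lam p T lam mj)%C)); auto.
    unfold Rdiv. rewrite Rmult_assoc, Rinv_l by lra. lra.
  - intros Hij d Hd. subst mj.
    change (Cmod (/ d)%C <= (4 * n / m + 8 * (1 + 2 * n)) * Lambda p lam mi mi).
    assert (HC0 : 0 <= (4 * n / m + 8 * (1 + 2 * n)) * Lambda p lam mi mi).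
    { apply Rmult_le_pos; [|lra]. assert (0 <= n / m) by (apply Rdiv_le_0_compat; lra).
      assert (4 * n / m = 4 * (n / m)) by (unfold Rdiv; ring). lra. }
    destruct (Req_dec (Cmod d) 0) as [Hd0|Hd0].
    { apply Cmod_eq_0 in Hd0. rewrite Hd0.
      replace (/ RtoC 0)%C with (RtoC 0) by (unfold Complex.Cinv, RtoC; simpl; f_equal; unfold Rdiv; ring).
      rewrite Cmod_0. lra. }
    assert (Hdp : 0 < Cmod d) by (pose proof (Cmod_ge_0 d); lra).
    assert (Hdnz : (d : C) <> 0%C) by (intro E; apply Hd0; rewrite E; apply Cmod_0).
    rewrite Cmod_inv by auto.
    destruct (t_cont p T lam eps mi Hp He HT Hlam Harg) as [dl [Hdl Hdlb]].
    set (A0 := / Cmod (Csqrt (T (zfun p lam mi)))).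
    destruct (Hreg mi) as [_ [Hne0 [Hre0 _]]].
    destruct (Csqrt_mul _ Hre0) as [Hff0 [Hmf0 _]].
    assert (Hcf0 : 0 < Cmod (Csqrt (T (zfun p lam mi)))).
    { apply Cmod_gt_0. intro E. apply Hne0. rewrite <- Hff0. change (Csqrt (T (zfun p lam mi)) = RtoC 0) in E. rewrite E. ring. }
    assert (HA0 : 0 < A0) by (apply Rinv_0_lt_compat; auto).
    set (Q0 := 2 * n / m + (1 + 2 * n) * (2 * A0)).
    assert (HQ0 : 0 < Q0).
    { unfold Q0. assert (0 <= n / m) by (apply Rdiv_le_0_compat; lra).
      assert (2 * n / m = 2 * (n / m)) by (unfold Rdiv; ring). nra. }
    assert (Hder : 1 <= 2 * Cmod d * Q0).
    { apply (deriv_part (h_lam p T lam) mi d Q0 dl); auto.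
      intros e [He0 Hedl].
      pose proof (Hmain (mi + e) mi) as Hme.
      replace (mi + e - mi) with e in Hme by ring. rewrite Rabs_pos_eq in Hme by lra.
      eapply Rle_trans; [exact Hme|]. apply Rmult_le_compat_l. apply Cmod_ge_0.
      unfold Q0. apply Rplus_le_compat_l. apply Rmult_le_compat_l. lra.
      apply Rmax_lub; [|fold A0; lra].
      destruct (Hreg (mi + e)) as [_ [Hnee [Hree _]]].
      destruct (Csqrt_mul _ Hree) as [Hffe [Hmfe _]].
      assert (Hte : Cmod (T (zfun p lam mi)) / 4 <= Cmod (T (zfun p lam (mi + e)))).
      { apply Hdlb. replace (mi + e - mi) with e by ring. rewrite Rabs_pos_eq; lra. }
      assert (Hcfe : 0 < Cmod (Csqrt (T (zfun p lam (mi + e))))).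
      { apply Cmod_gt_0. intro E. apply Hnee. rewrite <- Hffe. change (Csqrt (T (zfun p lam (mi + e))) = RtoC 0) in E. rewrite E. ring. }
      assert (Cmod (Csqrt (T (zfun p lam mi))) / 2 <= Cmod (Csqrt (T (zfun p lam (mi + e))))).
      { apply (pow_le_inv _ _ 2); try lra; try lia. }
      unfold A0. replace (2 * / Cmod (Csqrt (T (zfun p lam mi)))) with (/ (Cmod (Csqrt (T (zfun p lam mi))) / 2)) by (field; lra).
      apply Rinv_le_contravar; lra. }
    assert (HA0L : A0 <= 2 * Lambda p lam mi mi) by (pose proof (Hgb mi); unfold A0; lra).
    assert (/ Cmod d <= 2 * Q0).
    { apply (Rmult_le_reg_l (Cmod d)); auto. rewrite Rinv_r by lra. lra. }
    unfold Q0 in H.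
    assert (0 <= n / m) by (apply Rdiv_le_0_compat; lra).
    assert (2 * n / m = 2 * (n / m)) by (unfold Rdiv; ring).
    assert (4 * n / m = 4 * (n / m)) by (unfold Rdiv; ring).
    nra.
Qed.
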